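(* Let $\kappa>0$, $\mu>0$, and set $\sigma=\sqrt{\mu/\kappa}$. Fix a real constant $K_1$ and a choice of sign (the same in each formula below). For $0<\tau<1/\mu$ define \[ \tilde q_0(x)=\sqrt2\,\sigma\,\mathrm{sech}\big(\sqrt{\mu(1-\mu\tau)}\,x\pm K_1\big), \] \[ \tilde q_1(x)=-\frac{\sqrt{2\mu}\,\sigma}{\sqrt{1-\mu\tau}}\,\mathrm{sech}\big(\sqrt{\mu(1-\mu\tau)}\,x\pm K_1\big)\tanh\big(\sqrt{\mu(1-\mu\tau)}\,x\pm K_1\big), \] which give standing solitary-wave solutions $e^{i\mu t}(\tilde q_0(x),\tilde q_1(x))$ of the NLSH system $i\partial_tq_0+\partial_xq_1=-\kappa|q_0|^2q_0$, $i\tau\partial_tq_1=\partial_xq_0-q_1$, and let \[ u^+(x)=\sqrt2\,\sigma\,\mathrm{sech}\big(\sqrt{\mu}\,x\pm K_1\big) \] (the amplitude of the bright-soliton ground state $e^{i\mu t}u^+(x)$ of the NLS equation $iu_t+u_{xx}+\kappa|u|^2u=0$). Then as $\tau\to0$, $\{\tilde q_0\}$ converges uniformly on $\mathbb{R}$ to $u^+$ at a rate linear in $\tau$, and $\{\tilde q_1\}$ converges uniformly on $\mathbb{R}$ to $(u^+)'$ at a rate linear in $\tau$.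
   Context: Standing-wave ansatz: $(q_0,q_1)(x,t)=e^{i\mu t}(\tilde q_0(x),\tilde q_1(x))$ with $\mu\in\mathbb{R}$, which reduces NLSH to $\tilde q_0'=(1-\mu\tau)\tilde q_1$, $\tilde q_1'=(\mu-\kappa\tilde q_0^2)\tilde q_0$. *)

(* Defs.v *)
From Stdlib Require Export Reals.
From Coquelicot Require Export Coquelicot.
Open Scope R_scope.

Definition sech (x : R) : R := / cosh x.

Definition sigma (kappa mu : R) : R := sqrt (mu / kappa).

(* the sign +/- is encoded by s in {1,-1}: argument is (... x + s * K1) *)
Definition q0t (kappa mu K1 s tau x : R) : R :=
  sqrt 2 * sigma kappa mu * sech (sqrt (mu * (1 - mu * tau)) * x + s * K1).

Definition q1t (kappa mu K1 s tau x : R) : R :=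
  - (sqrt (2 * mu) * sigma kappa mu / sqrt (1 - mu * tau))
    * sech (sqrt (mu * (1 - mu * tau)) * x + s * K1)
    * tanh (sqrt (mu * (1 - mu * tau)) * x + s * K1).

Definition uplus (kappa mu K1 s x : R) : R :=
  sqrt 2 * sigma kappa mu * sech (sqrt mu * x + s * K1).

(* Main.v *)
Require Import Defs.
From Stdlib Require Import Reals.
From Coquelicot Require Import Coquelicot.
From Stdlib Require Import Lra.
Open Scope R_scope.
Lemma ch_sh y : cosh y * cosh y - sinh y * sinh y = 1.
Proof. unfold cosh, sinh. assert (H: exp y * exp (-y) = 1) by (rewrite <- exp_plus; replace (y + - y) with 0 by ring; apply exp_0). nra. Qed.
Lemma ch_pos y : 1 <= cosh y.
Proof. unfold cosh. pose proof (exp_ineq1_le y). pose proof (exp_ineq1_le (-y)). lra. Qed.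
Lemma ch_abs y : Rabs y <= 2 * cosh y.
Proof. unfold cosh. pose proof (exp_ineq1_le y). pose proof (exp_ineq1_le (-y)). pose proof (exp_pos y). pose proof (exp_pos (-y)). unfold Rabs; destruct Rcase_abs; lra. Qed.
Lemma sh_le y : Rabs (sinh y) <= cosh y.
Proof. pose proof (ch_sh y). pose proof (ch_pos y). rewrite <- (Rabs_pos_eq (cosh y)) by lra. apply (Rsqr_le_abs_0 (sinh y) (cosh y)). unfold Rsqr. nra. Qed.
Lemma d_sech y : is_derive (fun y => / cosh y) y (- sinh y / (cosh y * cosh y)).
Proof.
  pose proof (ch_pos y).
  assert (Hc : is_derive cosh y (sinh y)) by (apply is_derive_Reals, derivable_pt_lim_cosh).
  evar (l : R). replace (- sinh y / (cosh y * cosh y)) with l. apply (is_derive_inv cosh). exact Hc. lra.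
  unfold l. field. lra.
Qed.
Lemma d_g y : is_derive (fun y => sinh y / (cosh y * cosh y)) y ((2 - cosh y * cosh y) / (cosh y * (cosh y * cosh y))).
Proof.
  pose proof (ch_pos y). pose proof (ch_sh y).
  assert (Hc : is_derive cosh y (sinh y)) by (apply is_derive_Reals, derivable_pt_lim_cosh).
  assert (Hs : is_derive sinh y (cosh y)) by (apply is_derive_Reals, derivable_pt_lim_sinh).
  evar (l : R). replace ((2 - cosh y * cosh y) / (cosh y * (cosh y * cosh y))) with l.
  apply (is_derive_div sinh (fun y => cosh y * cosh y)). exact Hs. apply (is_derive_mult cosh cosh); [exact Hc|exact Hc|intros; apply Rmult_comm]. nra.
  unfold l. simpl. unfold plus, mult; simpl. field_simplify; try lra. replace (sinh y ^ 2) with (cosh y ^ 2 - 1) by nra. field. lra.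
Qed.
Lemma bd_sech y : Rabs (- sinh y / (cosh y * cosh y)) <= / cosh y.
Proof. pose proof (ch_pos y). pose proof (sh_le y).
  unfold Rdiv. rewrite Rabs_mult, Rabs_Ropp, Rabs_inv, (Rabs_pos_eq (cosh y * _)) by nra.
  apply (Rmult_le_reg_r (cosh y * cosh y)). nra. field_simplify; lra. Qed.
Lemma bd_g y : Rabs ((2 - cosh y * cosh y) / (cosh y * (cosh y * cosh y))) <= / cosh y.
Proof. pose proof (ch_pos y).
  unfold Rdiv. rewrite Rabs_mult, Rabs_inv, (Rabs_pos_eq (cosh y * _)) by nra.
  apply (Rmult_le_reg_r (cosh y * (cosh y * cosh y))). nra.
  assert (Rabs (2 - cosh y * cosh y) <= cosh y * cosh y) by (unfold Rabs; destruct Rcase_abs; nra).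
  field_simplify; nra. Qed.
Lemma g_bd y : Rabs (sinh y / (cosh y * cosh y)) <= 1.
Proof. pose proof (ch_pos y). pose proof (sh_le y).
  unfold Rdiv. rewrite Rabs_mult, Rabs_inv, (Rabs_pos_eq (cosh y * _)) by nra.
  apply (Rmult_le_reg_r (cosh y * cosh y)). nra. field_simplify; nra. Qed.

Lemma mvt_bound (h dh : R -> R) :
  (forall y, is_derive h y (dh y)) -> (forall y, Rabs (dh y) <= / cosh y) ->
  forall a b c x, 0 < b <= a ->
  Rabs (h (b*x+c) - h (a*x+c)) <= (a-b)*(2+Rabs c)/b.
Proof.
  intros Hd Hb a b c x Hab.
  destruct (MVT_gen (fun t => h (t*x+c)) b a (fun t => x * dh (t*x+c))) as [xi [Hxi Heq]].
  - intros t _. evar (l:R). replace (x * dh (t*x+c)) with l.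
    apply (is_derive_comp h (fun t => t*x+c)). apply Hd. auto_derive; auto. unfold l; simpl. unfold scal; simpl; unfold mult; simpl; ring.
  - intros t _. apply continuity_pt_filterlim. apply (ex_derive_continuous (fun t => h (t*x+c))).
    eexists. apply (is_derive_comp h (fun t => t*x+c)). apply Hd. auto_derive; auto. 
  - rewrite Rmin_left in Hxi by lra. rewrite Rmax_right in Hxi by lra.
    rewrite Rabs_minus_sym, Heq, Rabs_mult, Rabs_mult, (Rabs_pos_eq (a-b)) by lra.
    set (y := xi*x+c). pose proof (ch_pos y). pose proof (ch_abs y). pose proof (Hb y).
    assert (Hx: Rabs x * xi <= Rabs y + Rabs c).
    { replace x with ((y - c)/xi) by (unfold y; field; lra).
      unfold Rdiv. rewrite Rabs_mult, Rabs_inv, (Rabs_pos_eq xi) by lra.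
      replace (Rabs (y - c) * / xi * xi) with (Rabs (y-c)) by (field; lra).
      unfold Rminus. rewrite <- (Rabs_Ropp c). apply Rabs_triang. }
    assert (Hy: Rabs y * / cosh y <= 2).
    { apply (Rmult_le_reg_r (cosh y)). lra. field_simplify; lra. }
    assert (Rabs x * Rabs (dh y) <= (2 + Rabs c) / b).
    { apply Rle_trans with (Rabs x * / cosh y). apply Rmult_le_compat_l; auto. apply Rabs_pos.
      apply (Rmult_le_reg_r xi). lra.
      apply Rle_trans with (2 + Rabs c).
      replace (Rabs x * / cosh y * xi) with (Rabs x * xi * / cosh y) by ring.
      apply Rle_trans with ((Rabs y + Rabs c) * / cosh y).
      apply Rmult_le_compat_r. left; apply Rinv_0_lt_compat; lra. auto.
      assert (Rabs c * / cosh y <= Rabs c).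
      { pose proof (Rabs_pos c). assert (/ cosh y <= 1). { rewrite <- Rinv_1. apply Rinv_le_contravar; lra. } nra. }
      lra.
      unfold Rdiv. pose proof (Rabs_pos c). apply (Rmult_le_reg_r b); [lra|].
      replace ((2 + Rabs c) * / b * xi * b) with ((2+Rabs c)*xi) by (field; lra). nra. }
    unfold Rdiv in *. nra.
Qed.

Lemma Derive_uplus kappa mu K1 s x :
  Derive (uplus kappa mu K1 s) x =
  sqrt 2 * Defs.sigma kappa mu * (sqrt mu * (- sinh (sqrt mu * x + s * K1) /
     (cosh (sqrt mu * x + s * K1) * cosh (sqrt mu * x + s * K1)))).
Proof.
  apply is_derive_unique. unfold uplus, sech.
  apply is_derive_scal.
  evar (l:R). replace (sqrt mu * _) with l.
  apply (is_derive_comp (fun y => / cosh y) (fun x => sqrt mu * x + s * K1)).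
  apply d_sech. auto_derive; auto.
  unfold l; simpl. unfold scal; simpl; unfold mult; simpl; ring.
Qed.

Theorem proposition2 (kappa mu K1 s : R) :
  0 < kappa -> 0 < mu -> (s = 1 \/ s = -1) ->
  exists C tau0 : R, 0 < tau0 /\
    forall tau : R, 0 < tau -> tau < tau0 -> tau < / mu ->
      forall x : R,
        Rabs (q0t kappa mu K1 s tau x - uplus kappa mu K1 s x) <= C * tau /\
        Rabs (q1t kappa mu K1 s tau x - Derive (uplus kappa mu K1 s) x) <= C * tau.
Proof.
  intros Hk Hm _.
  set (A := sqrt 2 * Defs.sigma kappa mu).
  set (a := sqrt mu). set (c := s * K1).
  assert (HA : 0 <= A) by (unfold A, Defs.sigma; apply Rmult_le_pos; apply sqrt_pos).
  assert (Ha : 0 < a) by (apply sqrt_lt_R0; lra).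
  exists (2 * mu * A * (1 + a) * (3 + Rabs c)), (/ (2 * mu)).
  split. { apply Rinv_0_lt_compat; lra. }
  intros tau Ht Ht0 _ x.
  assert (Hmt : mu * tau < / 2).
  { apply (Rmult_lt_compat_l mu) in Ht0; [|lra]. rewrite Rinv_mult in Ht0.
    replace (mu * (/ 2 * / mu)) with (/2) in Ht0 by (field; lra). lra. }
  set (r := sqrt (1 - mu * tau)).
  assert (Hrr : r * r = 1 - mu * tau) by (apply sqrt_sqrt; lra).
  assert (Hr0 : 0 <= r) by apply sqrt_pos.
  assert (Hr : 1/2 < r <= 1) by (split; nra).
  assert (Hb : sqrt (mu * (1 - mu * tau)) = a * r) by (apply sqrt_mult; lra).
  assert (H2m : sqrt (2 * mu) = sqrt 2 * a) by (apply sqrt_mult; lra).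
  assert (Hab : 0 < a * r <= a) by (split; nra).
  assert (E1 : (1 - r) / r <= 2 * (mu * tau)).
  { apply (Rmult_le_reg_r r); [lra|]. field_simplify; nra. }
  assert (E : (a - a * r) * (2 + Rabs c) / (a * r) <= 2 * (mu * tau) * (2 + Rabs c)).
  { replace ((a - a * r) * (2 + Rabs c) / (a * r)) with ((1 - r) / r * (2 + Rabs c)) by (field; lra).
    apply Rmult_le_compat_r; [pose proof (Rabs_pos c); lra | exact E1]. }
  pose proof (Rabs_pos c) as Hc.
  assert (Hmtp : 0 <= mu * tau) by nra.
  split.
  - unfold q0t, uplus, sech. fold A a c. rewrite Hb.
    replace (A * / cosh (a * r * x + c) - A * / cosh (a * x + c))
      with (A * (/ cosh (a * r * x + c) - / cosh (a * x + c))) by ring.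
    rewrite Rabs_mult, (Rabs_pos_eq A) by lra.
    pose proof (mvt_bound (fun y => / cosh y) _ d_sech bd_sech a (a * r) c x Hab) as M.
    simpl in M.
    apply Rle_trans with (A * (2 * (mu * tau) * (2 + Rabs c))).
    + apply Rmult_le_compat_l; [lra|]. eapply Rle_trans; [exact M| exact E].
    + assert (HP : 0 <= A * (mu * tau)) by nra.
      replace (A * (2 * (mu * tau) * (2 + Rabs c))) with (2 * (A * (mu * tau)) * (2 + Rabs c)) by ring.
      replace (2 * mu * A * (1 + a) * (3 + Rabs c) * tau) with (2 * (A * (mu * tau)) * ((1 + a) * (3 + Rabs c))) by ring.
      apply Rmult_le_compat_l; nra.
  - rewrite Derive_uplus. unfold q1t, sech, tanh. fold A a c. rewrite Hb, H2m. fold (Defs.sigma kappa mu).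
    fold r.
    set (gb := sinh (a * r * x + c) / (cosh (a * r * x + c) * cosh (a * r * x + c))).
    set (ga := sinh (a * x + c) / (cosh (a * x + c) * cosh (a * x + c))).
    assert (Hch : 0 < cosh (a * r * x + c)) by (pose proof (ch_pos (a * r * x + c)); lra).
    assert (Hca : 0 < cosh (a * x + c)) by (pose proof (ch_pos (a * x + c)); lra).
    replace (- (sqrt 2 * a * Defs.sigma kappa mu / r) * / cosh (a * r * x + c) *
       (sinh (a * r * x + c) / cosh (a * r * x + c)) - A * (a * (- sinh (a * x + c) / (cosh (a * x + c) * cosh (a * x + c)))))
      with (- (A * a) * (gb * ((1 - r) / r) + (gb - ga))) by (unfold gb, ga, A; field; repeat split; lra).
    rewrite Rabs_mult, Rabs_Ropp, (Rabs_pos_eq (A * a)) by nra.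
    pose proof (mvt_bound (fun y => sinh y / (cosh y * cosh y)) _ d_g bd_g a (a * r) c x Hab) as M.
    simpl in M. fold gb ga in M.
    pose proof (g_bd (a * r * x + c)) as G. fold gb in G.
    assert (Rabs (gb * ((1 - r) / r) + (gb - ga)) <= 2 * (mu * tau) + 2 * (mu * tau) * (2 + Rabs c)).
    { eapply Rle_trans. apply Rabs_triang. apply Rplus_le_compat.
      - rewrite Rabs_mult. assert (0 <= (1 - r) / r) by (apply Rdiv_le_0_compat; lra).
        rewrite (Rabs_pos_eq ((1 - r) / r)) by lra. nra.
      - eapply Rle_trans; [exact M | exact E]. }
    assert (0 <= A * a) by nra.
    apply Rle_trans with (A * a * (2 * (mu * tau) + 2 * (mu * tau) * (2 + Rabs c))).
    + apply Rmult_le_compat_l; lra.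
    + assert (HP : 0 <= A * a * (mu * tau)) by nra.
      replace (A * a * (2 * (mu * tau) + 2 * (mu * tau) * (2 + Rabs c))) with (2 * (A * a * (mu * tau)) * (3 + Rabs c)) by ring.
      assert (HQ : 0 <= A * (mu * tau)) by nra.
      replace (2 * mu * A * (1 + a) * (3 + Rabs c) * tau) with (2 * (A * (mu * tau)) * (3 + Rabs c) + 2 * (A * a * (mu * tau)) * (3 + Rabs c)) by ring.
      assert (0 <= 2 * (A * (mu * tau)) * (3 + Rabs c)) by (apply Rmult_le_pos; lra).
      lra.
Qed.
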